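(* (Metatheory of CPL* natural deduction.) Fix a set $W$ of worlds with a converse well-founded accessibility relation $\prec$. For all contexts $\Gamma,\Gamma'$, worlds $w, w'$, and propositions $A, C$: (i) (Hypothesis) If $A[w] \in \Gamma$, then $\Gamma \vdash_{\mathbf{CPL*}} A[w]$. (ii) (Generalized weakening) If $\Gamma \subseteq_w \Gamma'$ and $\Gamma \vdash_{\mathbf{CPL*}} A[w]$, then $\Gamma' \vdash_{\mathbf{CPL*}} A[w]$. (iii) (Substitution) If $w' \prec^* w$, $\Gamma \vdash_{\mathbf{CPL*}} A[w]$, and $\Gamma, A[w] \vdash_{\mathbf{CPL*}} C[w']$, then $\Gamma \vdash_{\mathbf{CPL*}} C[w']$.
   Context: Fix a set $W$ of worlds and a binary accessibility relation $\prec$ on $W$ that is converse well-founded: there is no infinite chain $w_0 \prec w_1 \prec w_2 \prec \cdots$. $\prec^*$ and $\prec^+$ denote reflexive–transitive and transitive closures. Propositions: $A,B,C ::= Q \mid \bot \mid A \supset B \mid \Diamond A \mid \Box A$, $Q$ atomic. A context $\Gamma$ is a finite collection of judgments $A[w]$ ($w\in W$). $\Gamma \subseteq_w \Gamma'$ holds iff (a) for all $w'$ with $w \prec^* w'$, $A[w'] \in \Gamma$ implies $A[w'] \in \Gamma'$, and (b) for all $w'$ with $w \prec^+ w'$, $A[w'] \in \Gamma'$ implies $A[w'] \in \Gamma$. The judgment $\Gamma \vdash_{\mathbf{CPL*}} A[w]$ (natural deduction for de-tethered constructive provability logic) is defined one world at a time (provability at $w$ after provability at all $w'$ with $w\prec^+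 w'$; well-defined by converse well-foundedness) as the least relation closed under (premises may be meta-level quantifications/implications): (hyp) $\Gamma, A[w] \vdash A[w]$. ($\bot E$) If $w' \prec^* w$ and $\Gamma \vdash \bot[w]$ then $\Gamma \vdash C[w']$. ($\supset I$) If $\Gamma, A[w] \vdash B[w]$ then $\Gamma \vdash A \supset B[w]$. ($\supset E$) If $\Gamma \vdash A \supset B[w]$ and $\Gamma \vdash A[w]$ then $\Gamma \vdash B[w]$. ($\Diamond I$) If $w \prec w'$ and $\Gamma \vdash A[w']$ then $\Gamma \vdash \Diamond A[w]$. ($\Box I$) If $\Gamma \vdash A[w']$ for every $w'$ with $w \prec w'$, then $\Gamma \vdash \Box A[w]$. ($\Diamond E$) If $w'' \prec^* w$, $\Gamma \vdash \Diamond A[w]$, and for every $w'$ with $w \prec w'$, $\Gamma \vdash A[w']$ implies $\Gamma \vdash C[w'']$, then $\Gamma \vdash C[w'']$. ($\Box E$) If $w'' \prec^* w$, $\Gamma \vdash \Box A[w]$, and ($\Gamma \vdash A[w']$ for all $w'$ with $w \prec w'$) implies $\Gamma \vdash C[w'']$, then $\Gamma \vdash C[w'']$. *)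

(* Defs.v *)
From Stdlib Require Import List Relations Wellfounded Classical ClassicalEpsilon.
Import ListNotations.

Set Implicit Arguments.

Inductive cprop : Type :=
  | Atom : nat -> cprop
  | Bot : cprop
  | Imp : cprop -> cprop -> cprop
  | Dia : cprop -> cprop
  | Box : cprop -> cprop.

Section CPL.
Variable W : Type.
Variable R : W -> W -> Prop.

Definition ctx := list (cprop * W).

Definition no_inf_chain : Prop :=
  ~ exists f : nat -> W, forall n, R (f n) (f (S n)).

Definition Rplus := clos_trans W R.
Definition Rstar := clos_refl_trans W R.

Definition ctx_sub (w : W) (G G' : ctx) : Prop :=
  (forall w' A, Rstar w w' -> In (A, w') G -> In (A, w') G') /\
  (forall w' A, Rplus w w' -> In (A, w') G' -> In (A, w') G).

(* Provability at the single world v, given provability H at the worlds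
   strictly above v (H w' G A reads "G |- A[w']", only consulted when v <+ w').
   Each rule whose premise is at a world w with v <* w is split into the
   case w = v (recursive) and the case v <+ w (uses H). *)
Inductive prov_at (v : W) (H : W -> ctx -> cprop -> Prop) : ctx -> cprop -> Prop :=
  | r_hyp : forall G A, In (A, v) G -> prov_at v H G A
  | r_botE_here : forall G C, prov_at v H G Bot -> prov_at v H G C
  | r_botE_up : forall G C w, Rplus v w -> H w G Bot -> prov_at v H G C
  | r_impI : forall G A B, prov_at v H ((A, v) :: G) B -> prov_at v H G (Imp A B)
  | r_impE : forall G A B, prov_at v H G (Imp A B) -> prov_at v H G A -> prov_at v H G B
  | r_diaI : forall G A w', R v w' -> H w' G A -> prov_at v H G (Dia A)
  | r_boxI : forall G A, (forall w', R v w' -> H w' G A) -> prov_at v H G (Box A)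
  | r_diaE_here : forall G A C,
      prov_at v H G (Dia A) ->
      (forall w', R v w' -> H w' G A -> prov_at v H G C) ->
      prov_at v H G C
  | r_diaE_up : forall G A C w, Rplus v w -> H w G (Dia A) ->
      (forall w', R w w' -> H w' G A -> prov_at v H G C) ->
      prov_at v H G C
  | r_boxE_here : forall G A C,
      prov_at v H G (Box A) ->
      ((forall w', R v w' -> H w' G A) -> prov_at v H G C) ->
      prov_at v H G C
  | r_boxE_up : forall G A C w, Rplus v w -> H w G (Box A) ->
      ((forall w', R w w' -> H w' G A) -> prov_at v H G C) ->
      prov_at v H G C.

Definition Rabove (x y : W) : Prop := Rplus y x.

Fixpoint prov_acc (v : W) (a : Acc Rabove v) {struct a} : ctx -> cprop -> Prop :=
  match a with
  | Acc_intro _ f =>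
      prov_at v (fun w G A => forall h : Rplus v w, prov_acc (f w h) G A)
  end.

Lemma no_inf_chain_wf : no_inf_chain -> well_founded (fun x y => R y x).
Proof.
  intros Hn.
  assert (Hstep : forall x, ~ Acc (fun x y => R y x) x ->
                  { y | R x y /\ ~ Acc (fun x y => R y x) y }).
  { intros x Hx. apply constructive_indefinite_description.
    apply NNPP; intros Hc. apply Hx. constructor. intros y Hy.
    apply NNPP; intros Hy'. apply Hc. exists y. auto. }
  intros x. apply NNPP; intros Hx.
  pose (T := { z | ~ Acc (fun x y => R y x) z }).
  pose (next := fun t : T => let (z, hz) := t in
                  exist (fun z => ~ Acc (fun x y => R y x) z)
                        (proj1_sig (Hstep z hz)) (proj2 (proj2_sig (Hstep z hz)))).
  pose (g := fix g n := match n with O => exist _ x Hx | S m => next (g m) end).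
  apply Hn. exists (fun n => proj1_sig (g n)). intros n. simpl.
  destruct (g n) as [z hz]. simpl. exact (proj1 (proj2_sig (Hstep z hz))).
Qed.

Lemma no_inf_chain_wf_plus : no_inf_chain -> well_founded Rabove.
Proof.
  intros Hn. apply (wf_incl _ _ (clos_trans W (fun x y => R y x))).
  - intros x y H. unfold Rabove, Rplus in H. induction H.
    + constructor 1. exact H.
    + econstructor 2; eauto.
  - apply wf_clos_trans. apply no_inf_chain_wf. exact Hn.
Qed.

Definition prov (Hn : no_inf_chain) (G : ctx) (A : cprop) (w : W) : Prop :=
  prov_acc (no_inf_chain_wf_plus Hn w) G A.

End CPL.

(* Main.v *)
Require Import Defs.
From Stdlib Require Import List Relations.
From Stdlib Require Import Classical.

Section Proofs.
Variable W : Type.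
Variable R : W -> W -> Prop.

Lemma plus_R a b : R a b -> Rplus R a b.
Proof. intros; constructor 1; auto. Qed.
Lemma plus_trans a b c : Rplus R a b -> Rplus R b c -> Rplus R a c.
Proof. intros; econstructor 2; eauto. Qed.
Lemma plus_star a b : Rplus R a b -> Rstar R a b.
Proof. intros; apply clos_t_clos_rt; auto. Qed.
Lemma star_plus a b c : Rstar R a b -> Rplus R b c -> Rplus R a c.
Proof. intros; eapply clos_rt_t; eauto. Qed.
Lemma plus_star' a b c : Rplus R a b -> Rstar R b c -> Rplus R a c.
Proof.
  intros H1 H2. induction H2; auto.
  - eapply plus_trans; eauto. apply plus_R; auto.
Qed.
Lemma star_trans a b c : Rstar R a b -> Rstar R b c -> Rstar R a c.
Proof. intros; econstructor 3; eauto. Qed.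

Lemma transfer v (H H' : W -> ctx W -> cprop -> Prop) (Rel : ctx W -> ctx W -> Prop) :
  (forall K1 K2 B, Rel K1 K2 -> Rel ((B,v)::K1) ((B,v)::K2)) ->
  (forall K1 K2 D, Rel K1 K2 -> In (D,v) K1 -> prov_at R v H' K2 D) ->
  (forall K1 K2 y D, Rel K1 K2 -> Rplus R v y -> H y K1 D -> H' y K2 D) ->
  (forall K1 K2 y D, Rel K1 K2 -> Rplus R v y -> H' y K2 D -> H y K1 D) ->
  forall K1 D, prov_at R v H K1 D -> forall K2, Rel K1 K2 -> prov_at R v H' K2 D.
Proof.
  intros Hc Hh Hf Hb K1 D Hp.
  induction Hp; intros K2 Hr.
  - eauto.
  - apply r_botE_here; auto.
  - eapply r_botE_up; eauto.
  - apply r_impI; auto.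
  - eapply r_impE; eauto.
  - eapply r_diaI; eauto. eapply Hf; eauto using plus_R.
  - eapply r_boxI; intros. eapply Hf; eauto using plus_R.
  - eapply r_diaE_here; [apply IHHp; auto|].
    intros w' Hw' Hh'. match goal with Hx : forall w', _ -> _ -> forall K2, _ |- _ => eapply Hx end; eauto. eapply Hb; eauto using plus_R.
  - eapply r_diaE_up; eauto.
    intros w' Hw' Hh'. match goal with Hx : forall w', _ -> _ -> forall K2, _ |- _ => eapply Hx end; eauto. eapply Hb; eauto.
    eapply plus_trans; eauto using plus_R.
  - eapply r_boxE_here; [apply IHHp; auto|].
    intros Hall. match goal with Hx : _ -> forall K2, _ |- _ => eapply Hx end; eauto. intros w' Hw'. eapply Hb; eauto using plus_R.
  - eapply r_boxE_up; eauto.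
    intros Hall. match goal with Hx : _ -> forall K2, _ |- _ => eapply Hx end; eauto. intros w' Hw'. eapply Hb; eauto.
    eapply plus_trans; eauto using plus_R.
Qed.

Lemma at_cong v H H' :
  (forall w G A, Rplus R v w -> (H w G A <-> H' w G A)) ->
  forall G A, prov_at R v H G A -> prov_at R v H' G A.
Proof.
  intros He G A Hp. eapply transfer with (Rel := eq); eauto.
  - intros; subst; auto.
  - intros; subst; constructor; auto.
  - intros; subst; apply He; auto.
  - intros; subst; apply He; auto.
Qed.

Lemma acc_irr v (a : Acc (Rabove R) v) :
  forall (a' : Acc (Rabove R) v) G A, prov_acc a G A <-> prov_acc a' G A.
Proof.
  revert v a. fix IH 2. intros v [f] [f'] G A. simpl.
  assert (IH' := fun w h => IH w (f w h)). clear IH. rename IH' into IH. split; apply at_cong.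
  - intros w G' A' Hw. split; intros Hx h.
    + apply (proj1 (IH w h (f' w h) G' A')). apply Hx.
    + apply (proj2 (IH w h (f' w h) G' A')). apply Hx.
  - intros w G' A' Hw. split; intros Hx h.
    + apply (proj2 (IH w h (f' w h) G' A')). apply Hx.
    + apply (proj1 (IH w h (f' w h) G' A')). apply Hx.
Qed.

Variable Hn : no_inf_chain R.

Definition Hp := fun w G A => prov Hn G A w.

Lemma unfold_prov G A v : prov Hn G A v <-> prov_at R v Hp G A.
Proof.
  unfold prov. generalize (no_inf_chain_wf_plus Hn v) as a. intros [f]. simpl.
  split; apply at_cong; intros w G' A' Hw; unfold Hp, prov; split; intros Hx.
  - exact (proj1 (acc_irr _ (f w Hw) _ _ _) (Hx Hw)).
  - intros h. exact (proj2 (acc_irr _ (f w h) _ _ _) Hx).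
  - intros h. exact (proj2 (acc_irr _ (f w h) _ _ _) Hx).
  - exact (proj1 (acc_irr _ (f w Hw) _ _ _) (Hx Hw)).
Qed.

Lemma plus_irrefl z : Rplus R z z -> False.
Proof.
  assert (Hacc := no_inf_chain_wf_plus Hn z).
  induction Hacc as [z _ IH]. intros Hz. apply (IH z); auto.
Qed.

Lemma ctx_sub_up w y G G' : Rplus R w y -> ctx_sub R w G G' ->
  ctx_sub R y G G' /\ ctx_sub R y G' G.
Proof.
  intros Hy [Ha Hb]. repeat split; intros.
  - apply Ha; eauto using plus_star, plus_star'.
  - apply Hb; eauto using plus_trans.
  - apply Hb; eauto using plus_star'.
  - apply Ha; eauto using plus_star, plus_trans.
Qed.

Lemma weakening : forall w G G' A, ctx_sub R w G G' -> prov Hn G A w -> prov Hn G' A w.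
Proof.
  intros w. induction w as [w IH] using (well_founded_ind (no_inf_chain_wf_plus Hn)).
  intros G G' A Hs Hpr. apply unfold_prov. apply unfold_prov in Hpr.
  eapply transfer with (Rel := ctx_sub R w); eauto.
  - intros K1 K2 B [Ha Hb]. split; intros w' A' H1 H2.
    + destruct H2 as [H2|H2]; [left; auto| right; auto].
    + destruct H2 as [H2|H2]; [left; auto| right; auto].
  - intros K1 K2 D [Ha _] Hin. constructor. apply Ha; auto. constructor 2.
  - intros K1 K2 y D Hr Hy H1. unfold Hp in *. eapply IH; eauto.
    exact (proj1 (ctx_sub_up _ _ _ _ Hy Hr)).
  - intros K1 K2 y D Hr Hy H1. unfold Hp in *. eapply IH; eauto.
    exact (proj2 (ctx_sub_up _ _ _ _ Hy Hr)).
Qed.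

Lemma agree y K1 K2 D :
  (forall z B, Rstar R y z -> (In (B,z) K1 <-> In (B,z) K2)) ->
  prov Hn K1 D y -> prov Hn K2 D y.
Proof.
  intros Ha. apply weakening. split; intros; apply Ha; eauto using plus_star.
Qed.

Definition atw (x : W) (L : ctx W) := forall B z, In (B,z) L -> z = x.

Lemma claim (A : cprop) (w : W) (G : ctx W) : prov Hn G A w ->
  forall x, Rstar R x w -> forall L, atw x L -> forall D,
    prov Hn (L ++ (A,w)::G) D x <-> prov Hn (L ++ G) D x.
Proof.
  intros HA x. induction x as [x IH] using (well_founded_ind (no_inf_chain_wf_plus Hn)).
  intros Hxw.
  assert (Hup : forall L, atw x L -> forall y D, Rplus R x y ->
     (Hp y (L ++ (A,w)::G) D <-> Hp y (L ++ G) D)).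
  { intros L HL y D Hy. unfold Hp.
    assert (Hd : forall K, (forall z B, Rstar R y z -> (In (B,z) (L ++ K) <-> In (B,z) K))).
    { intros K z B Hz. split; intros Hi.
      - apply in_app_or in Hi as [Hi|Hi]; auto.
        apply HL in Hi. subst. exfalso. apply (plus_irrefl x). eapply plus_star'; eauto.
      - apply in_or_app; auto. }
    assert (E1 : forall D, prov Hn (L ++ (A,w)::G) D y <-> prov Hn ((A,w)::G) D y).
    { intros D'; split; apply agree; intros; [|symmetry]; apply Hd; auto. }
    assert (E2 : forall D, prov Hn (L ++ G) D y <-> prov Hn G D y).
    { intros D'; split; apply agree; intros; [|symmetry]; apply Hd; auto. }
    assert (E3 : prov Hn ((A,w)::G) D y <-> prov Hn G D y).
    { destruct (classic (Rstar R y w)) as [Hyw|Hyw].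
      - apply (IH y Hy Hyw nil). intros ? ? [].
      - split; apply agree; intros z B Hz; split; intros Hi.
        + destruct Hi as [Hi|Hi]; auto. inversion Hi; subst. contradiction.
        + right; auto.
        + right; auto.
        + destruct Hi as [Hi|Hi]; auto. inversion Hi; subst. contradiction. }
    rewrite E1, E2. exact E3. }
  intros L HL D. rewrite !unfold_prov. split; intros H1.
  - eapply transfer with (Rel := fun K1 K2 => exists L, atw x L /\ K1 = L ++ (A,w)::G /\ K2 = L ++ G); eauto.
    + intros K1 K2 B (L' & HL' & -> & ->). exists ((B,x)::L'). repeat split; auto.
      intros B' z [Hi|Hi]; [inversion Hi; auto| eauto].
    + intros K1 K2 D' (L' & HL' & -> & ->) Hi. apply in_app_or in Hi as [Hi|[Hi|Hi]].
      * constructor; apply in_or_app; auto.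
      * inversion Hi; subst. apply unfold_prov. revert HA. apply weakening.
        split; intros w' A' H2 H3; [apply in_or_app; auto|].
        apply in_app_or in H3 as [H3|H3]; auto. apply HL' in H3; subst.
        exfalso; eapply plus_irrefl; eauto.
      * constructor; apply in_or_app; right; auto.
    + intros K1 K2 y D' (L' & HL' & -> & ->) Hy H2. apply Hup; auto.
    + intros K1 K2 y D' (L' & HL' & -> & ->) Hy H2. apply Hup; auto.
  - eapply transfer with (Rel := fun K1 K2 => exists L, atw x L /\ K2 = L ++ (A,w)::G /\ K1 = L ++ G); eauto.
    + intros K1 K2 B (L' & HL' & -> & ->). exists ((B,x)::L'). repeat split; auto.
      intros B' z [Hi|Hi]; [inversion Hi; auto| eauto].
    + intros K1 K2 D' (L' & HL' & -> & ->) Hi. constructor.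
      apply in_app_or in Hi as [Hi|Hi]; apply in_or_app; auto. right; right; auto.
    + intros K1 K2 y D' (L' & HL' & -> & ->) Hy H2. apply Hup; auto.
    + intros K1 K2 y D' (L' & HL' & -> & ->) Hy H2. apply Hup; auto.
Qed.

End Proofs.

Theorem theorem4 (W : Type) (R : W -> W -> Prop) (Hn : no_inf_chain R) :
  (* (i) hypothesis *)
  (forall (G : ctx W) (A : cprop) (w : W), In (A, w) G -> prov Hn G A w) /\
  (* (ii) generalized weakening *)
  (forall (G G' : ctx W) (A : cprop) (w : W),
      ctx_sub R w G G' -> prov Hn G A w -> prov Hn G' A w) /\
  (* (iii) substitution *)
  (forall (G : ctx W) (A C : cprop) (w w' : W),
      Rstar R w' w -> prov Hn G A w -> prov Hn ((A, w) :: G) C w' -> prov Hn G C w').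
Proof.
  split; [|split].
  - intros G A w Hi. apply unfold_prov. constructor; auto.
  - intros; eapply weakening; eauto.
  - intros G A C w w' Hs HA HC.
    apply (claim _ _ _ _ _ _ HA _ Hs nil); [intros ? ? []|exact HC].
Qed.
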